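(* For every smooth $A[G]$-module $V$ and every $1\le r\le\infty$, the canonical map $\mathcal{F}_r(V)\to\mathcal{L}_r(V)$ (inclusion into $V^{U_1(\varpi^r)}$ followed by localization at $\mathfrak n$) is injective.
   Context: Setting: $F/\mathbb{Q}_p$ finite (integers $\mathcal{O}_F$, uniformizer $\varpi$, residue field $k_F$), $K/\mathbb{Q}_\ell$ finite with $\ell\ne p$ (integers $\mathcal{O}$, maximal ideal $\lambda$), $G=\mathrm{GL}_n(F)$ with $\ell\nmid\#\mathrm{GL}_n(k_F)$, $A$ an $\mathcal{O}$-algebra. $U_1(\varpi^r)$ is the mirahoric subgroup (elements of $\mathrm{GL}_n(\mathcal{O}_F)$ with last row $\equiv(0,\dots,0,1)\bmod\varpi^r$; for $r=\infty$, the mirabolic subgroup $P(\mathcal{O}_F)$). The commuting operators $U^{(j)}=[U_1(\varpi^r)\mathrm{diag}(\varpi1_j,1_{n-j})U_1(\varpi^r)]$, $1\le j\le n-1$, make $V^{U_1(\varpi^r)}$ an $\mathcal{O}[X_1,\dots,X_{n-1}]$-module ($X_j\mapsto U^{(j)}$). $\mathfrak n=(\lambda,X_1,\dots,X_{n-1})$, $\mathcal{L}_r(V)=(V^{U_1(\varpi^r)})_{\mathfrak n}$, and $\mathcal{F}_r(V)=\{x\in V^{U_1(\varpi^r)}:U^{(1)}x=\dots=U^{(n-1)}x=0\}$. *)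

(* Defs.v *)
From HB Require Import structures.
From mathcomp Require Import all_boot all_order all_algebra.
From mathcomp Require Import mpoly.
From Stdlib Require Import ClassicalEpsilon.

Set Implicit Arguments.
Unset Strict Implicit.
Unset Printing Implicit Defensive.

Import Order.TTheory GRing.Theory Num.Theory.
Local Open Scope ring_scope.

(* [vge v x k] means "v(x) >= k" with the convention v(0) = +oo.        *)
Definition vge (F : fieldType) (v : F -> int) (x : F) (k : int) : bool :=
  (x == 0) || (k <= v x).

(* A finite extension of Q_p with residue field of cardinality q:      *)
Record padic_field (p q : nat) (F : fieldType) := PadicField {
  pval : F -> int;
  pval_mul : forall x y : F, x != 0 -> y != 0 -> pval (x * y) = pval x + pval y;
  pval_add : forall (x y : F) (k : int),
      vge pval x k -> vge pval y k -> vge pval (x + y) k;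
  pval_unif : exists w : F, w != 0 /\ pval w = 1;
  pf_prime : prime p;
  pf_char0 : forall m : nat, (0 < m)%N -> (m%:R : F) != 0;
  pval_p : vge pval (p%:R : F) 1;
  pf_residue : exists s : seq F,
      [/\ size s = q,
          all (fun x => vge pval x 0) s,
          (forall i j : nat, (i < q)%N -> (j < q)%N ->
              vge pval (s`_i - s`_j) 1 -> i = j) &
          (forall x : F, vge pval x 0 ->
              exists2 y, y \in s & vge pval (x - y) 1)];
  pf_complete : forall u : nat -> F,
      (forall k : int, exists N : nat, forall m1 m2 : nat,
          (N <= m1)%N -> (N <= m2)%N -> vge pval (u m1 - u m2) k) ->
      exists l : F, forall k : int, exists N : nat, forall m : nat,
          (N <= m)%N -> vge pval (u m - l) k
}.

(* O is (a copy of) the ring of integers of K, via an injective ring   *)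
(* morphism iota : O -> K with image {x | v(x) >= 0}.                   *)
Definition ring_of_integers (l qK : nat) (K : fieldType)
    (PK : padic_field l qK K) (O : comNzRingType) (iota : {rmorphism O -> K}) :=
  injective iota /\ (forall x : K, vge (pval PK) x 0 <-> exists o, iota o = x).

Definition in_lambda (l qK : nat) (K : fieldType) (PK : padic_field l qK K)
    (O : comNzRingType) (iota : {rmorphism O -> K}) (o : O) : bool :=
  vge (pval PK) (iota o) 1.

(* Subgroups of G = GL_N(F), N = n.+1.                                  *)
Section Groups.
Variables (p q : nat) (F : fieldType) (PF : padic_field p q F) (n : nat).
Local Notation v := (pval PF).
Local Notation M := ('M[F]_n.+1).

Definition in_GLO (g : M) : Prop :=
  (forall i j, vge v (g i j) 0) /\ (\det g != 0 /\ v (\det g) = 0).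

Definition cong_sub (m : nat) (g : M) : Prop :=
  in_GLO g /\ forall i j, vge v (g i j - (i == j)%:R) m%:Z.

(* mirahoric U_1(varpi^r); r = None stands for r = infinity, where     *)
(* U_1(varpi^oo) is the mirabolic P(O_F) (last row exactly (0,..,0,1)). *)
Definition mirahoric (r : option nat) (g : M) : Prop :=
  in_GLO g /\ forall j : 'I_n.+1,
    match r with
    | Some k => vge v (g ord_max j - (j == ord_max)%:R) k%:Z
    | None => g ord_max j == (j == ord_max)%:R
    end.

Definition diag_unif (w : F) (j : nat) : M :=
  \matrix_(a, b) (if a == b then (if (a < j)%N then w else 1) else 0).
End Groups.

Definition smooth_rep (p q : nat) (F : fieldType) (PF : padic_field p q F)
    (n : nat) (A : pzRingType) (V : lmodType A) (rho : 'M[F]_n.+1 -> V -> V) :=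
  [/\ (forall g, g \in unitmx -> forall x y, rho g (x + y) = rho g x + rho g y),
      (forall g, g \in unitmx -> forall (a : A) x, rho g (a *: x) = a *: rho g x),
      (forall x, rho 1%:M x = x),
      (forall g h, g \in unitmx -> h \in unitmx ->
          forall x, rho (g *m h) x = rho g (rho h x)) &
      (* smoothness: the stabilizer of every vector is open, i.e. contains *)
      (* some principal congruence subgroup *)
      (forall x, exists m : nat, (0 < m)%N /\
          forall g, cong_sub PF m g -> rho g x = x)].

Section Hecke.
Variables (F : fieldType) (n : nat) (A : pzRingType) (V : lmodType A).
Variable rho : 'M[F]_n.+1 -> V -> V.
Variable U : 'M[F]_n.+1 -> Prop.

Definition fixed_by (x : V) : Prop := forall g, U g -> rho g x = x.

Definition dcoset (g h : 'M[F]_n.+1) : Prop :=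
  exists u1 u2, [/\ U u1, U u2 & h = u1 *m g *m u2].

(* s is a (duplicate-free) system of representatives of U g U / U *)
Definition is_coset_reps (g : 'M[F]_n.+1) (s : seq 'M[F]_n.+1) : Prop :=
  [/\ (forall h, h \in s -> dcoset g h),
      (forall h, dcoset g h -> exists2 h', h' \in s & U (invmx h' *m h)) &
      (forall i j, (i < size s)%N -> (j < size s)%N ->
         U (invmx s`_i *m s`_j) -> i = j)].

Definition hecke (g : 'M[F]_n.+1) (x : V) : V :=
  \sum_(h <- epsilon (inhabits [::]) (is_coset_reps g)) rho h x.
End Hecke.

(* The O[X_1..X_{N-1}]-module structure on V^U (X_j |-> U^(j)), the    *)
(* ideal n = (lambda, X_1, ..., X_{N-1}) and localization.  Variables   *)
(* of {mpoly O[n]} are indexed by i : 'I_n, 'X_i standing for X_{i+1}. *)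
Section Module.
Variables (O : comNzRingType) (A : algType O) (V : lmodType A) (n : nat).
Variable T : 'I_n -> V -> V.   (* T i = U^(i+1) *)

Definition mono_act (m : 'X_{1..n}) (x : V) : V :=
  foldr (fun i y => iter (m i) (T i) y) x (enum 'I_n).

Definition poly_act (P : {mpoly O[n]}) (x : V) : V :=
  \sum_(m <- msupp P) ((P@_m)%:A : A) *: mono_act m x.

Variable lam : O -> bool.

Definition in_max_ideal (P : {mpoly O[n]}) : Prop :=
  exists (ls : seq (O * {mpoly O[n]})) (qs : 'I_n -> {mpoly O[n]}),
    all (fun c => lam c.1) ls /\
    P = \sum_(c <- ls) c.1 *: c.2 + \sum_(i < n) 'X_i * qs i.

(* equality in the localization S^{-1} M, S = O[X] \ n:                *)
(* x/s = y/t  iff  exists u in S, u (t x - s y) = 0                     *)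
Definition loc_eq (xs yt : V * {mpoly O[n]}) : Prop :=
  exists u : {mpoly O[n]}, ~ in_max_ideal u /\
    poly_act u (poly_act yt.2 xs.1 - poly_act xs.2 yt.1) = 0.
End Module.

(* Main.v *)
Set Warnings "-all".
Require Import Defs.
From HB Require Import structures.
From mathcomp Require Import all_boot all_order all_algebra.
From mathcomp Require Import mpoly.
From mathcomp Require Import zify.
From Stdlib Require Import Classical ClassicalEpsilon.
Set Implicit Arguments.
Unset Strict Implicit.
Unset Printing Implicit Defensive.
Import Order.TTheory GRing.Theory Num.Theory.
Local Open Scope ring_scope.

Section Val.
Variables (p q : nat) (F : fieldType) (PF : padic_field p q F).
Local Notation v := (pval PF).

Lemma v1 : v 1 = 0.
Proof.
have := pval_mul PF (oner_neq0 F) (oner_neq0 F); rewrite mul1r => h.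
by have := @addrI _ (v 1) 0 (v 1); rewrite addr0 => /(_ h).
Qed.

Lemma vN1 : v (-1) = 0.
Proof.
have h1 : (-1 : F) != 0 by rewrite oppr_eq0 oner_neq0.
have := pval_mul PF h1 h1; rewrite mulrNN mulr1 v1 => h. lia.
Qed.

Lemma vV (x : F) : x != 0 -> v x^-1 = - v x.
Proof.
move=> hx; have hx' : x^-1 != 0 by rewrite invr_eq0.
have := pval_mul PF hx' hx; rewrite mulVf // v1 => h. lia.
Qed.

Lemma vge0 k : vge v 0 k. Proof. by rewrite /vge eqxx. Qed.

Lemma vge_le (x : F) (k k' : int) : (k' <= k)%R -> vge v x k -> vge v x k'.
Proof. rewrite /vge => hk /orP [->//|h]; apply/orP; right; lia. Qed.

Lemma vgeM (x y : F) a b : vge v x a -> vge v y b -> vge v (x * y) (a + b).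
Proof.
case: (eqVneq x 0) => [->|hx]; first by move=> *; rewrite mul0r; apply: vge0.
case: (eqVneq y 0) => [->|hy]; first by move=> *; rewrite mulr0; apply: vge0.
rewrite /vge (negbTE hx) (negbTE hy) /= => ha hb.
by rewrite mulf_eq0 (negbTE hx) (negbTE hy) /= (pval_mul PF hx hy) lerD.
Qed.

Lemma vgeM0 (x y : F) a : vge v x a -> vge v y 0 -> vge v (x * y) a.
Proof. by move=> h1 h2; have := vgeM h1 h2; rewrite addr0. Qed.

Lemma vge1 : vge v (1 : F) 0.
Proof. by rewrite /vge v1 lexx orbT. Qed.

Lemma vgeN (x : F) k : vge v x k -> vge v (- x) k.
Proof.
move=> h; rewrite -mulN1r; have := vgeM (x := -1) (a := 0) _ h.
rewrite add0r; apply; by rewrite /vge vN1 lexx orbT.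
Qed.

Lemma vgeD (x y : F) k : vge v x k -> vge v y k -> vge v (x + y) k.
Proof. exact: pval_add. Qed.

Lemma vgeB (x y : F) k : vge v x k -> vge v y k -> vge v (x - y) k.
Proof. by move=> h1 h2; apply: vgeD => //; apply: vgeN. Qed.

Lemma vge_sum (I : Type) (r : seq I) (P : pred I) (G : I -> F) k :
  (forall i, P i -> vge v (G i) k) -> vge v (\sum_(i <- r | P i) G i) k.
Proof. move=> h; apply: (big_ind (fun x => vge v x k)) => //; [exact: vge0 | move=> a b ha hb; exact: vgeD ha hb]. Qed.

Lemma vge_prod (I : Type) (r : seq I) (P : pred I) (G : I -> F) :
  (forall i, P i -> vge v (G i) 0) -> vge v (\prod_(i <- r | P i) G i) 0.
Proof. move=> h; apply: (big_ind (fun x => vge v x 0)) => //; [exact: vge1 | move=> a b ha hb; exact: vgeM0 ha hb]. Qed.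

Lemma vge_all (x : F) : (forall k, vge v x k) -> x = 0.
Proof.
move=> h; have := h (v x + 1); rewrite /vge => /orP [/eqP //|H]; exfalso; lia.
Qed.

Lemma vge_nat_r (x : F) : vge v x 0 -> x != 0 -> (0 <= v x)%R.
Proof. by rewrite /vge => /orP [->|]. Qed.
End Val.

Lemma vge_sign (p q : nat) (F : fieldType) (PF : padic_field p q F) (b : nat) :
  vge (pval PF) ((-1 : F) ^+ b) 0.
Proof.
rewrite -signr_odd; case: (odd b); rewrite ?expr1 ?expr0; last exact: vge1.
apply: vgeN; exact: vge1.
Qed.

Section Mat.
Variables (p q : nat) (F : fieldType) (PF : padic_field p q F) (n : nat).
Local Notation v := (pval PF).
Local Notation M := ('M[F]_n.+1).

Definition intm (m : nat) (A : 'M[F]_m) := forall i j, vge v (A i j) 0.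

Lemma intm_mul m (A B : 'M[F]_m) : intm A -> intm B -> intm (A *m B).
Proof.
move=> hA hB i j; rewrite mxE; apply: vge_sum => k _; exact: vgeM0.
Qed.

Lemma intm_det m (A : 'M[F]_m) : intm A -> vge v (\det A) 0.
Proof.
move=> hA; rewrite /determinant; apply: vge_sum => s _.
apply: vgeM0; first exact: vge_sign.
by apply: vge_prod => i _.
Qed.

Lemma intm_adj m (A : 'M[F]_m) : intm A -> intm (\adj A).
Proof.
move=> hA i j; rewrite /adjugate mxE /cofactor.
apply: vgeM0; first exact: vge_sign.
apply: intm_det => a b; by rewrite !mxE.
Qed.

Lemma GLO_unit (u : M) : in_GLO PF u -> u \in unitmx.
Proof. by case=> _ [h _]; rewrite unitmxE unitfE. Qed.

Lemma intm_inv (u : M) : in_GLO PF u -> intm (invmx u).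
Proof.
move=> hu; have hU := GLO_unit hu; case: hu => hi [hd hv].
move=> i j; rewrite /invmx hU mxE; apply: vgeM0; last exact: intm_adj.
by rewrite /vge invr_eq0 (negbTE hd) /= vV // hv oppr0 lexx.
Qed.

Lemma GLO_mul (u w : M) : in_GLO PF u -> in_GLO PF w -> in_GLO PF (u *m w).
Proof.
case=> hi [hd hv] [hi' [hd' hv']]; split; first exact: intm_mul.
rewrite det_mulmx mulf_neq0 //; split=> //.
by rewrite pval_mul // hv hv' addr0.
Qed.

Lemma GLO_inv (u : M) : in_GLO PF u -> in_GLO PF (invmx u).
Proof.
move=> hu; split; first exact: intm_inv.
case: hu => _ [hd hv]; rewrite det_inv invr_eq0 hd; split=> //.
by rewrite vV // hv oppr0.
Qed.

Lemma GLO1 : in_GLO PF (1%:M : M).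
Proof.
split; last by rewrite det1 oner_neq0 v1.
move=> i j; rewrite mxE; case: (i == j); [exact: vge1 | exact: vge0].
Qed.

Definition LR (A : M) (j : 'I_n.+1) := A ord_max j - (j == ord_max)%:R.

Lemma LR_mul (A B : M) j :
  LR (A *m B) j = \sum_k LR A k * B k j + LR B j.
Proof.
have E : \sum_k (k == ord_max)%:R * B k j = B ord_max j :> F.
  rewrite (bigD1 ord_max) //= eqxx mul1r big1 ?addr0 // => k /negbTE ->.
  by rewrite mul0r.
have -> : \sum_k LR A k * B k j =
   \sum_k A ord_max k * B k j - \sum_k (k == ord_max)%:R * B k j.
  by rewrite -sumrB; apply: eq_bigr => k _; rewrite /LR mulrBl.
by rewrite E /LR mxE addrA subrK.
Qed.

Definition kle (r : option nat) (k0 : int) : bool :=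
  match r with Some k => (k0 <= k%:Z)%R | None => true end.

Lemma mirP r (u : M) : mirahoric PF r u <->
  in_GLO PF u /\ (forall j k0, kle r k0 -> vge v (LR u j) k0).
Proof.
rewrite /mirahoric /LR; split; case=> hG h; split=> //.
- move=> j k0; have := h j; case: r {h} => [k|] /= hj hk.
    exact: vge_le hk hj.
  by move/eqP: hj => ->; rewrite subrr; apply: vge0.
- move=> j; have := h j; case: r {h} => [k|] /= hj.
    by apply: hj; rewrite lexx.
  by rewrite -subr_eq0; apply/eqP; apply: vge_all => k0; apply: hj.
Qed.

Lemma U1 r : mirahoric PF r (1%:M : M).
Proof.
apply/mirP; split; first exact: GLO1.
by move=> j k0 _; rewrite /LR mxE eq_sym subrr; apply: vge0.
Qed.

Lemma Umul r (u w : M) : mirahoric PF r u -> mirahoric PF r w ->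
  mirahoric PF r (u *m w).
Proof.
move=> /mirP [hu hlu] /mirP [hw hlw]; apply/mirP; split; first exact: GLO_mul.
move=> j k0 hk; rewrite LR_mul; apply: vgeD; last exact: hlw.
apply: vge_sum => i _; apply: vgeM0; first exact: hlu.
by case: hw => hi _.
Qed.

Lemma Uinv r (u : M) : mirahoric PF r u -> mirahoric PF r (invmx u).
Proof.
move=> /mirP [hu hlu]; apply/mirP; split; first exact: GLO_inv.
move=> j k0 hk; have h := LR_mul u (invmx u) j.
have h0 : LR (u *m invmx u) j = 0 by rewrite mulmxV ?GLO_unit // /LR mxE eq_sym subrr.
move: h; rewrite h0 => /eqP; rewrite eq_sym addrC addr_eq0 => /eqP ->.
apply: vgeN; apply: vge_sum => i _; apply: vgeM0; first exact: hlu.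
exact: intm_inv.
Qed.

End Mat.

Lemma invmxM' (F : fieldType) (m : nat) (A B : 'M[F]_m) :
  A \in unitmx -> B \in unitmx -> invmx (A *m B) = invmx B *m invmx A.
Proof.
move=> hA hB; have hAB : A *m B \in unitmx by rewrite unitmx_mul hA hB.
have h : (A *m B) *m (invmx B *m invmx A) = 1%:M.
  by rewrite mulmxA -(mulmxA A) mulmxV // mulmx1 mulmxV.
by rewrite -[LHS]mulmx1 -h mulmxA mulVmx // mul1mx.
Qed.

Section Diag.
Variables (p q : nat) (F : fieldType) (PF : padic_field p q F) (n : nat).
Variable r : option nat.
Local Notation v := (pval PF).
Local Notation M := ('M[F]_n.+1).
Local Notation U := (mirahoric PF r).
Variables (w : F) (hw : w != 0 /\ pval PF w = 1) (j : nat) (hj : (j <= n)%N).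

Lemma diag_mull (x : F) (B : M) a b :
  (diag_unif n x j *m B) a b = (if (a < j)%N then x else 1) * B a b.
Proof.
rewrite mxE (bigD1 a) //= big1 ?addr0; first by rewrite mxE eqxx.
by move=> c hc; rewrite mxE eq_sym (negbTE hc) mul0r.
Qed.

Lemma diag_mulr (x : F) (B : M) a b :
  (B *m diag_unif n x j) a b = B a b * (if (b < j)%N then x else 1).
Proof.
rewrite mxE (bigD1 b) //= big1 ?addr0; first by rewrite mxE eqxx.
by move=> c hc; rewrite mxE (negbTE hc) mulr0.
Qed.

Local Notation g := (diag_unif n w j).
Local Notation D := (diag_unif n w^-1 j).

Lemma DgV : D *m g = 1%:M.
Proof.
apply/matrixP => a b; rewrite diag_mull !mxE.
case: eqP => [->|_]; last by rewrite mulr0.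
by case: ifP => _; rewrite ?mulVf ?mulr1 //; case: hw.
Qed.

Lemma g_unit : g \in unitmx.
Proof. by case: (mulmx1_unit DgV). Qed.

Lemma invg : invmx g = D.
Proof. by rewrite -[LHS]mul1mx -DgV -mulmxA mulmxV ?g_unit // mulmx1. Qed.

Lemma conj_U (u0 u : M) : U u0 -> U u ->
  (forall a b, vge v (u a b - u0 a b) 1) ->
  U (invmx (u0 *m g) *m (u *m g)).
Proof.
move=> hu0 hu hab.
have uu0 : u0 \in unitmx by case/mirP: hu0 => /GLO_unit.
have hk : U (invmx u0 *m u) by apply: Umul => //; apply: Uinv.
set k := invmx u0 *m u in hk.
have hk1 : forall a b, vge v (k a b - (a == b)%:R) 1.
  move=> a b.
  have -> : k a b - (a == b)%:R = (invmx u0 *m (u - u0)) a b.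
    by rewrite mulmxBr mulVmx // !mxE.
  rewrite mxE; apply: vge_sum => c _.
  have := vgeM (intm_inv (proj1 (proj1 (mirP _ _ _) hu0)) a c) (hab c b).
  by rewrite add0r !mxE.
rewrite invmxM' ?g_unit // invg mulmxA -(mulmxA D).
rewrite -/k.
case/mirP: hk => [[hki [hkd hkv]] hkl].
have E : forall a b, (D *m k *m g) a b =
    (if (a < j)%N then w^-1 else 1) * k a b * (if (b < j)%N then w else 1).
  by move=> a b; rewrite diag_mulr diag_mull.
have nmax : ~~ (@ord_max n < j)%N by rewrite -leqNgt.
apply/mirP; split; first split.
- move=> a b; rewrite E; case: (eqVneq a b) => [<-|hne].
    case: ifP => _; last by rewrite mul1r mulr1; exact: hki.
    rewrite mulrAC mulVf ?mul1r; [exact: hki | by case: hw].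
  have hab' := hk1 a b; rewrite (negbTE hne) subr0 in hab'.
  have hd : vge v (if (a < j)%N then w^-1 else 1) (-1).
    case: ifP => _; last by apply: (vge_le (k := 0)); [|exact: vge1].
    by rewrite /vge invr_eq0 (negbTE (proj1 hw)) /= vV ?(proj2 hw) //; case: hw.
  have := vgeM hd hab'; rewrite addNr => h0; apply: vgeM0 => //.
  case: ifP => _; last exact: vge1.
  by rewrite /vge (proj2 hw) (negbTE (proj1 hw)).
- have := DgV; move/(congr1 determinant); rewrite det_mulmx det1 => hDg.
  by rewrite (det_mulmx (D *m k)) (det_mulmx D k) mulrAC hDg mul1r; split.
- move=> b k0 hk0; rewrite /LR E (negbTE nmax) mul1r.
  case: (eqVneq b ord_max) => [->|hb].
    by rewrite (negbTE nmax) mulr1; have := hkl ord_max k0 hk0; rewrite /LR eqxx.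
  have := hkl b k0 hk0; rewrite /LR (negbTE hb) subr0 => h; rewrite subr0.
  apply: vgeM0 => //; case: ifP => _; last exact: vge1.
  by rewrite /vge (proj2 hw) (negbTE (proj1 hw)).
Qed.

Lemma dc_unit h : dcoset U g h -> h \in unitmx.
Proof.
case=> [u1 [u2 [hu1 hu2 ->]]].
case/mirP: hu1 => /GLO_unit h1 _; case/mirP: hu2 => /GLO_unit h2 _.
by rewrite !unitmx_mul h1 h2 g_unit.
Qed.

Lemma U_sym (a b : M) : a \in unitmx -> b \in unitmx ->
  U (invmx a *m b) -> U (invmx b *m a).
Proof.
by move=> ha hb /Uinv; rewrite invmxM' ?unitmx_inv // invmxK.
Qed.

Lemma U_trans (a b c : M) : b \in unitmx ->
  U (invmx a *m b) -> U (invmx b *m c) -> U (invmx a *m c).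
Proof.
move=> hb h1 h2; have := Umul h1 h2.
by rewrite mulmxA -(mulmxA _ b) mulmxV // mulmx1.
Qed.

Lemma cover : exists t : seq M, (forall h, h \in t -> dcoset U g h) /\
  (forall u, U u -> exists2 h, h \in t & U (invmx h *m (u *m g))).
Proof.
have [s [hsz hall hdist hcov]] := pf_residue PF.
pose FT := {ffun ('I_n.+1 * 'I_n.+1) -> 'I_q}.
pose approx (u : M) (f : FT) := forall a b, vge v (u a b - s`_(f (a, b))) 1.
have happ : forall u, U u -> exists f : FT, approx u f.
  move=> u /mirP [[hi _] _].
  have : forall ab : 'I_n.+1 * 'I_n.+1,
      exists k : 'I_q, vge v (u ab.1 ab.2 - s`_k) 1.
    move=> [a b] /=; have [y ys hy] := hcov _ (hi a b).
    have hidx : (index y s < q)%N by rewrite -hsz index_mem.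
    by exists (Ordinal hidx) => /=; rewrite nth_index.
  case/fin_all_exists => f hf; exists [ffun ab => f ab] => a b.
  by rewrite ffunE; exact: (hf (a, b)).
have key : forall L : seq FT, exists t : seq M,
    (forall h, h \in t -> dcoset U g h) /\
    (forall f, f \in L -> forall u, U u -> approx u f ->
       exists2 h, h \in t & U (invmx h *m (u *m g))).
  elim => [|f L [t [ht1 ht2]]]; first by exists [::]; split.
  case: (classic (exists u0, U u0 /\ approx u0 f)) => [[u0 [hu0 ha0]]|hno].
  - exists (u0 *m g :: t); split.
      move=> h; rewrite inE => /orP [/eqP->|hin]; last exact: ht1.
      by exists u0, 1%:M; split; [ | exact: U1 | rewrite mulmx1].
    move=> f'; rewrite inE => /orP [/eqP->|hin] u hu ha.
      exists (u0 *m g); first by rewrite mem_head.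
      apply: conj_U => // a b; have h1 := ha a b; have h2 := ha0 a b.
      have -> : u a b - u0 a b = (u a b - s`_(f (a, b))) - (u0 a b - s`_(f (a, b))).
        by rewrite opprB addrA subrK.
      exact: vgeB.
    have [h hh hU] := ht2 f' hin u hu ha; exists h => //; by rewrite inE hh orbT.
  - exists t; split => // f'; rewrite inE => /orP [/eqP->|hin] u hu ha.
      by exfalso; apply: hno; exists u.
    exact: (ht2 f' hin u hu ha).
have [t [ht1 ht2]] := key (enum FT); exists t; split => // u hu.
have [f hf] := happ u hu; apply: (ht2 f) => //; by rewrite mem_enum.
Qed.

Lemma dedup (t : seq M) : (forall h, h \in t -> dcoset U g h) ->
  exists s : seq M, [/\ (forall h, h \in s -> dcoset U g h),
    (forall h', h' \in t -> exists2 h'', h'' \in s & U (invmx h'' *m h')) &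
    (forall i k, (i < size s)%N -> (k < size s)%N ->
        U (invmx s`_i *m s`_k) -> i = k)].
Proof.
elim: t => [|a t IH] ht; first by exists [::]; split.
have ht' : forall h, h \in t -> dcoset U g h.
  by move=> h hh; apply: ht; rewrite inE hh orbT.
have [s [hs1 hs2 hs3]] := IH ht'.
have ha : dcoset U g a := ht a (mem_head _ _).
case: (classic (exists2 h'', h'' \in s & U (invmx h'' *m a))) => [[h'' hh'' hU]|hno].
  exists s; split => // h'; rewrite inE => /orP [/eqP->|hin]; last exact: hs2.
  by exists h''.
exists (a :: s); split.
- move=> h; rewrite inE => /orP [/eqP->//|]; exact: hs1.
- move=> h'; rewrite inE => /orP [/eqP->|hin].
    exists a; first exact: mem_head.
    by rewrite mulVmx ?dc_unit //; exact: U1.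
  have [h'' hin'' hU] := hs2 _ hin; exists h'' => //; by rewrite inE hin'' orbT.
- move=> [|i] [|k] //= hi hk hU.
  + exfalso; apply: hno; exists s`_k; first exact: mem_nth.
    apply: U_sym => //; [exact: dc_unit | apply: dc_unit; apply: hs1; exact: mem_nth].
  + exfalso; apply: hno; exists s`_i => //; exact: mem_nth.
  + by congr S; apply: hs3.
Qed.

Lemma reps_exist : exists s, is_coset_reps U g s.
Proof.
have [t [ht1 ht2]] := cover; have [s [hs1 hs2 hs3]] := dedup ht1.
exists s; split => // h [u1 [u2 [hu1 hu2 ->]]].
have [h' h't hU'] := ht2 u1 hu1; have [h'' hs hU''] := hs2 h' h't.
exists h'' => //; apply: (U_trans (b := h')) => //; first exact: dc_unit (ht1 _ h't).
by rewrite mulmxA; apply: Umul.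
Qed.

End Diag.

Lemma addf_sub (A : pzRingType) (V : lmodType A) (f : V -> V) :
  (forall x y, f (x + y) = f x + f y) -> forall x y, f (x - y) = f x - f y.
Proof.
move=> hadd x y.
have h0 : f 0 = 0.
  have := hadd 0 0; rewrite addr0 => /(congr1 (fun z => z - f 0)).
  by rewrite subrr addrK.
have hN : f (- y) = - f y.
  have := hadd y (- y); rewrite subrr h0 => /eqP; rewrite eq_sym addrC addr_eq0.
  by move/eqP.
by rewrite hadd hN.
Qed.

Lemma mpoly_decomp (O : comNzRingType) (n : nat) (P : {mpoly O[n]}) :
  exists qs : 'I_n -> {mpoly O[n]},
    P = P@_0 *: 1 + \sum_(i < n) 'X_i * qs i.
Proof.
move: P; apply: mpolyind => [|c m p hm hc [qs IH]].
  exists (fun _ => 0); rewrite mcoeff0 scale0r add0r big1 // => i _.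
  by rewrite mulr0.
case: (eqVneq m 0%MM) => [->|hm0].
  exists qs; rewrite mcoeffD mcoeffZ mcoeffX eqxx mulr1 scalerDl mpolyX0.
  by rewrite -addrA -IH.
have [i hi] : exists i, m i != 0%N.
  apply/existsP; apply: contraR hm0 => /existsPn h; apply/eqP/mnmP => i.
  by rewrite mnm0E; apply/eqP; have := h i; rewrite negbK.
have hX : 'X_[m] = 'X_i * 'X_[m - U_(i)] :> {mpoly O[n]}.
  rewrite -mpolyXD; congr mpolyX; apply/mnmP => j.
  rewrite mnmDE mnmBE mnm1E; case: eqP => [<-|_] /=; last by rewrite subn0.
  by rewrite add1n subn1 prednK // lt0n.
exists (fun j : 'I_n => qs j + (if j == i then c *: 'X_[m - U_(i)] else 0 : {mpoly O[n]})).
rewrite mcoeffD mcoeffZ mcoeffX (negbTE hm0) mulr0 add0r.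
have -> : \sum_(j < n) 'X_j * (qs j + (if j == i then c *: 'X_[m - U_(i)] else 0))
   = \sum_(j < n) 'X_j * qs j + c *: 'X_[m].
  under eq_bigr do rewrite mulrDr.
  rewrite big_split /=; congr (_ + _).
  rewrite (bigD1 i) //= eqxx big1 ?addr0; first by rewrite hX scalerAr.
  by move=> j /negbTE ->; rewrite mulr0.
by rewrite {1}IH addrC -addrA.
Qed.

Section Act.
Variables (O : comNzRingType) (A : algType O) (V : lmodType A) (n : nat).
Variable T : 'I_n -> V -> V.

Lemma mono_act_zero (m : 'X_{1..n}) (z : V) :
  (forall i, T i z = 0) -> (forall i, T i 0 = 0) ->
  mono_act T m z = if m == 0%MM then z else 0.
Proof.
move=> hz h0.
have it : forall i k a, (a = z \/ a = 0) -> iter k.+1 (T i) a = 0.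
  move=> i; elim=> [|k IH] a ha /=; first by case: ha => ->.
  by rewrite -/(iter k.+1 (T i) a) IH.
have gen : forall l : seq 'I_n,
    foldr (fun i y => iter (m i) (T i) y) z l =
    if all (fun i => m i == 0%N) l then z else 0.
  elim=> [|i l IH] //=; rewrite IH.
  case: (eqVneq (m i) 0%N) => [->|hmi] //=.
  have [k ->] : exists k, m i = k.+1 by exists (m i).-1; rewrite prednK // lt0n.
  apply: it; by case: ifP; [left|right].
rewrite /mono_act gen; congr (if _ then _ else _).
apply/idP/eqP => [/allP h|->].
  by apply/mnmP => i; rewrite mnm0E; apply/eqP; apply: h; rewrite mem_enum.
by apply/allP => i _; rewrite mnm0E.
Qed.

Lemma poly_act1 (x : V) : poly_act T 1 x = x.
Proof.
rewrite /poly_act msupp1 big_seq1 mcoeff1 eqxx.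
rewrite (_ : mono_act T 0%MM x = x); first by rewrite scale1r scale1r.
rewrite /mono_act; elim: (enum 'I_n) => //= i l ->; by rewrite mnm0E.
Qed.

Lemma poly_act_zero (u : {mpoly O[n]}) (z : V) :
  (forall i, T i z = 0) -> (forall i, T i 0 = 0) ->
  poly_act T u z = (u@_0%MM)%:A *: z.
Proof.
move=> hz h0; rewrite /poly_act.
under eq_bigr do rewrite mono_act_zero //.
have -> : \sum_(m <- msupp u) (u@_m)%:A *: (if m == 0%MM then z else 0)
    = \sum_(m <- msupp u | m == 0%MM) (u@_m)%:A *: z.
  rewrite [RHS]big_mkcond /=; apply: eq_bigr => m _.
  by case: ifP => _; rewrite ?scaler0.
case: (boolP (0%MM \in msupp u)) => h.
  rewrite -big_filter (filter_pred1_uniq (msupp_uniq u) h) big_seq1 //.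
rewrite big1_seq; last by move=> m /andP [/eqP -> h']; rewrite h' in h.
by rewrite memN_msupp_eq0 // scale0r scale0r.
Qed.
End Act.

Lemma padic_v1 (p q : nat) (F : fieldType) (PF : padic_field p q F) : pval PF 1 = 0.
Proof. exact: v1. Qed.

Unset Implicit Arguments.

(* Paper's n is n.+1 here; 'X_i (i : 'I_n) is X_{i+1} and acts by U^(i+1). *)
Theorem lemma4
    (p q l qK : nat) (F : fieldType) (PF : padic_field p q F)
    (K : fieldType) (PK : padic_field l qK K)
    (O : comNzRingType) (iota : {rmorphism O -> K})
    (hO : ring_of_integers PK iota)
    (hlp : l != p)
    (n : nat)
    (hGL : ~~ (l %| \prod_(i < n.+1) (q ^ n.+1 - q ^ i))%N)
    (w : F) (hw : w != 0 /\ pval PF w = 1)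
    (A : algType O) (V : lmodType A) (rho : 'M[F]_n.+1 -> V -> V)
    (hrho : smooth_rep PF rho)
    (r : option nat) (hr : forall k, r = Some k -> (1 <= k)%N) :
  let U := mirahoric PF r in
  let T := fun i : 'I_n => hecke rho U (diag_unif n w i.+1) in
  let Fr := fun x : V => fixed_by rho U x /\ forall i, T i x = 0 in
  forall x y : V, Fr x -> Fr y ->
    loc_eq T (in_lambda PK iota) (x, 1) (y, 1) -> x = y.
Proof.
move=> U T Fr x y [_ hx0] [_ hy0] [u [hu hpoly]].
case: hrho => hadd _ _ _ _.
have Tsub : forall i a b, T i (a - b) = T i a - T i b.
  move=> i a b; rewrite /T /hecke -sumrB; apply: eq_big_seq => h hh.
  have [s hs] := reps_exist r hw (ltn_ord i).
  have hs' := epsilon_spec (inhabits [::]) _ (ex_intro _ s hs).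
  case: hs' => hdc _ _; have hu' := dc_unit hw (hdc h hh).
  by apply: addf_sub => a' b'; apply: hadd.
have T0 : forall i, T i 0 = 0.
  by move=> i; have := Tsub i 0 0; rewrite subrr => ->; rewrite subrr.
have Tz : forall i, T i (x - y) = 0 by move=> i; rewrite Tsub hx0 hy0 subrr.
move: hpoly; rewrite /= !poly_act1 poly_act_zero //.
set c := u@_0%MM => hc.
have hcl : ~~ in_lambda PK iota c.
  apply/negP => hl; apply: hu.
  have [qs hqs] := mpoly_decomp u.
  exists [:: (c, 1)], qs; split; first by rewrite /= hl.
  by rewrite big_seq1 /= {1}hqs.
case: hO => hinj hint.
have hc0 : vge (pval PK) (iota c) 0 by apply/hint; exists c.
move: hcl; rewrite /in_lambda /vge negb_or => /andP [hnz hlt].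
move: hc0; rewrite /vge (negbTE hnz) /= => hge.
have hv0 : pval PK (iota c) = 0 by apply/eqP; rewrite eq_le hge andbT; rewrite -ltNge in hlt; lia.
have [d hd] : exists d, iota d = (iota c)^-1.
  by apply/hint; rewrite /vge invr_eq0 (negbTE hnz) /= vV // hv0 oppr0 lexx.
have hdc : d * c = 1.
  by apply: hinj; rewrite rmorphM rmorph1 hd mulVf.
have hA : (d%:A * c%:A : A) = 1 by rewrite mulr_algl scalerA hdc scale1r.
apply/eqP; rewrite -subr_eq0; apply/eqP.
by rewrite -[x - y]scale1r -hA -scalerA hc scaler0.
Qed.
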